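(* Fix $\mu>0$. As $D\to\infty$ through odd integers, the probability mass function of $\mathrm{MedPois}_\mu^{(D)}$ converges pointwise on $\mathbb{N}_0$ to one of the following: (i) a point mass $\delta_m$ with $m\in\{\lfloor\mu\rfloor,\lceil\mu\rceil\}$; or (ii) the discrete uniform distribution on two consecutive integers $\{m,m+1\}$ with $\{m,m+1\}\cap\{\lfloor\mu\rfloor,\lceil\mu\rceil\}\neq\emptyset$.
   Context: For odd $D$, $\mathrm{MedPois}_\mu^{(D)}$ is the law of the sample median, i.e. the $\lceil D/2\rceil$-th smallest, of $D$ i.i.d. Poisson($\mu$) random variables. *)

(* Defs.v *)
From Stdlib Require Import Arith Reals Lra Lia.
Open Scope R_scope.

Fixpoint sumR (n : nat) (f : nat -> R) : R :=
  match n with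
  | O => 0
  | S n' => sumR n' f + f n'
  end.

Definition pois_pmf (mu : R) (j : nat) : R :=
  exp (- mu) * mu ^ j / INR (Factorial.fact j).

Definition pois_lt (mu : R) (k : nat) : R := sumR k (pois_pmf mu).

Definition pois_gt (mu : R) (k : nat) : R := 1 - pois_lt mu k - pois_pmf mu k.

Definition multinom (a b c : nat) : R :=
  INR (Factorial.fact (a + b + c)) / (INR (Factorial.fact a) * INR (Factorial.fact b) * INR (Factorial.fact c)).

(* Law of the sample median of D = 2n+1 i.i.d. Poisson(mu) variables,
   i.e. the (n+1)-th = ceil(D/2)-th smallest.  The median equals k iff,
   writing a = #{i | X_i < k}, b = #{i | X_i = k}, c = #{i | X_i > k}
   (a + b + c = D), we have a <= n and a + b >= n+1.  The count vector
   (a,b,c) is multinomial(D; P(X<k), P(X=k), P(X>k)). *)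
Definition medpois_pmf (mu : R) (n : nat) (k : nat) : R :=
  let D := (2 * n + 1)%nat in
  sumR (S n) (fun a =>
    sumR (S (D - a)) (fun b =>
      if Nat.leb (S n) (a + b) then
        let c := (D - a - b)%nat in
        multinom a b c * pois_lt mu k ^ a * pois_pmf mu k ^ b * pois_gt mu k ^ c
      else 0)).

Definition is_floor (mu : R) (m : nat) : Prop := INR m <= mu < INR m + 1.
Definition is_ceil (mu : R) (m : nat) : Prop := INR m - 1 < mu <= INR m.
Definition floor_or_ceil (mu : R) (m : nat) : Prop := is_floor mu m \/ is_ceil mu m.

Definition point_mass (m : nat) : nat -> R :=
  fun k => if Nat.eqb k m then 1 else 0.

Definition unif2 (m : nat) : nat -> R :=
  fun k => if orb (Nat.eqb k m) (Nat.eqb k (S m)) then 1/2 else 0.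

(* Main.v *)
Require Import Defs.
From Stdlib Require Import Reals.
Open Scope R_scope.
From Stdlib Require Import Arith Lra Lia.
From Coquelicot Require Import Coquelicot.
Open Scope R_scope.


Lemma sumR_ext n f g : (forall i, (i < n)%nat -> f i = g i) -> sumR n f = sumR n g.
Proof. induction n; simpl; intros H; [reflexivity|]. rewrite IHn by (intros; apply H; lia). rewrite H by lia. reflexivity. Qed.

Lemma sumR_plus n f g : sumR n (fun i => f i + g i) = sumR n f + sumR n g.
Proof. induction n; simpl; [lra|]. rewrite IHn. lra. Qed.

Lemma sumR_scal n c f : sumR n (fun i => c * f i) = c * sumR n f.
Proof. induction n; simpl; [lra|]. rewrite IHn. lra. Qed.

Lemma sumR_split m n f : sumR (m + n) f = sumR m f + sumR n (fun i => f (m + i)%nat).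
Proof. induction n; simpl. rewrite Nat.add_0_r; lra. rewrite Nat.add_succ_r. simpl. rewrite IHn. lra. Qed.

Lemma sumR_le n f g : (forall i, (i < n)%nat -> f i <= g i) -> sumR n f <= sumR n g.
Proof. induction n; simpl; intros H; [lra|]. assert (f n <= g n) by (apply H; lia).
 assert (sumR n f <= sumR n g) by (apply IHn; intros; apply H; lia). lra. Qed.

Lemma sumR_zero n f : (forall i, (i < n)%nat -> f i = 0) -> sumR n f = 0.
Proof. intros H. transitivity (sumR n (fun _ => 0)). apply sumR_ext; auto.
 induction n; simpl; [lra|]. rewrite IHn; [lra|]. intros; apply H; lia. Qed.

Lemma sumR_nonneg n f : (forall i, (i < n)%nat -> 0 <= f i) -> 0 <= sumR n f.
Proof. intros H. rewrite <- (sumR_zero n (fun _ => 0)) by auto. apply sumR_le. auto. Qed.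

Lemma sumR_sum_f n f : sumR (S n) f = sum_f_R0 f n.
Proof. induction n. simpl. lra. change (sumR (S (S n)) f) with (sumR (S n) f + f (S n)). rewrite IHn. reflexivity. Qed.

Lemma sumR_shift1 n f : sumR (S n) f = f O + sumR n (fun i => f (S i)).
Proof. induction n; simpl in *. lra. rewrite IHn. lra. Qed.

Lemma sumR_rev n f : sumR n f = sumR n (fun i => f (n - 1 - i)%nat).
Proof. induction n. reflexivity.
 change (sumR (S n) f) with (sumR n f + f n). rewrite IHn, sumR_shift1.
 replace (S n - 1 - 0)%nat with n by lia.
 rewrite (sumR_ext n (fun i => f (S n - 1 - S i)%nat) (fun i => f (n - 1 - i)%nat)) by (intros; f_equal; lia).
 lra. Qed.

Lemma sumR_tri D (h : nat -> nat -> R) :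
  sumR (S D) (fun a => sumR (S (D - a)) (fun b => h a (a + b)%nat)) =
  sumR (S D) (fun j => sumR (S j) (fun a => h a j)).
Proof.
  induction D.
  - simpl. lra.
  - change (sumR (S (S D)) (fun a => sumR (S (S D - a)) (fun b => h a (a + b)%nat)))
      with (sumR (S D) (fun a => sumR (S (S D - a)) (fun b => h a (a + b)%nat))
            + sumR (S (S D - S D)) (fun b => h (S D) (S D + b)%nat)).
    rewrite (sumR_ext (S D) _ (fun a => sumR (S (D - a)) (fun b => h a (a + b)%nat) + h a (S D))).
    2:{ intros a Ha. replace (S D - a)%nat with (S (D - a)) by lia. simpl.
        replace (a + S (D - a))%nat with (S D) by lia. reflexivity. }
    rewrite sumR_plus, IHD. replace (S D - S D)%nat with O by lia. simpl.
    rewrite Nat.add_0_r. lra.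
Qed.

Notation Cb := Binomial.C.

Lemma Cb_nonneg n k : 0 <= Cb n k.
Proof. unfold Binomial.C. apply Rmult_le_pos. apply pos_INR.
 apply Rlt_le, Rinv_0_lt_compat, Rmult_lt_0_compat; apply INR_fact_lt_0. Qed.

Lemma binom_sum x y N : sumR (S N) (fun i => Cb N i * x ^ i * y ^ (N - i)) = (x + y) ^ N.
Proof. rewrite sumR_sum_f, binomial. reflexivity. Qed.

Lemma multinom_eq1 a b c : multinom a b c = Cb (a + b + c) (a + b) * Cb (a + b) a.
Proof. unfold multinom, Binomial.C.
 replace (a + b + c - (a + b))%nat with c by lia. replace (a + b - a)%nat with b by lia.
 pose proof (INR_fact_lt_0 a). pose proof (INR_fact_lt_0 b). pose proof (INR_fact_lt_0 c).
 pose proof (INR_fact_lt_0 (a+b)). field. lra. Qed.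

Lemma multinom_eq2 a b c : multinom a b c = Cb (a + b + c) a * Cb (b + c) b.
Proof. unfold multinom, Binomial.C.
 replace (a + b + c - a)%nat with (b + c)%nat by lia. replace (b + c - b)%nat with c by lia.
 pose proof (INR_fact_lt_0 a). pose proof (INR_fact_lt_0 b). pose proof (INR_fact_lt_0 c).
 pose proof (INR_fact_lt_0 (b+c)). field. lra. Qed.

Definition B (D j : nat) (s : R) : R := Cb D j * s ^ j * (1 - s) ^ (D - j).
Definition G (n : nat) (s : R) : R := sumR (S n) (fun i => B (2 * n + 1) (S n + i) s).

Lemma med_identity n p qq :
  sumR (S n) (fun a =>
    sumR (S ((2 * n + 1) - a)) (fun b =>
      if Nat.leb (S n) (a + b) then
        multinom a b ((2 * n + 1) - a - b) * p ^ a * qq ^ b * (1 - p - qq) ^ ((2 * n + 1) - a - b)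
      else 0))
  = G n (p + qq) - G n p.
Proof.
  set (D := (2 * n + 1)%nat).
  set (T := fun a b => if Nat.leb (S n) (a + b) then
        multinom a b (D - a - b) * p ^ a * qq ^ b * (1 - p - qq) ^ (D - a - b) else 0).
  change (sumR (S n) (fun a => sumR (S (D - a)) (T a)) = G n (p + qq) - G n p).
  assert (Hfull : sumR (S D) (fun a => sumR (S (D - a)) (T a)) = G n (p + qq)).
  { set (h := fun a j => if Nat.leb (S n) j then
        multinom a (j - a) (D - j) * p ^ a * qq ^ (j - a) * (1 - p - qq) ^ (D - j) else 0).
    rewrite (sumR_ext (S D) (fun a => sumR (S (D - a)) (T a))
               (fun a => sumR (S (D - a)) (fun b => h a (a + b)%nat))).
    2:{ intros a Ha. apply sumR_ext. intros b Hb. unfold T, h.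
        replace (a + b - a)%nat with b by lia. replace (D - (a + b))%nat with (D - a - b)%nat by lia.
        reflexivity. }
    rewrite sumR_tri.
    rewrite (sumR_ext (S D) _ (fun j => if Nat.leb (S n) j then B D j (p + qq) else 0)).
    2:{ intros j Hj. unfold h. destruct (Nat.leb (S n) j); [| apply sumR_zero; auto].
        unfold B. replace (1 - (p + qq)) with (1 - p - qq) by ring.
        rewrite <- binom_sum.
        transitivity (sumR (S j) (fun a => (Cb D j * (1-p-qq)^(D-j)) * (Cb j a * p^a * qq^(j-a)))).
        2:{ rewrite sumR_scal. ring. }
        apply sumR_ext. intros a Ha.
        rewrite multinom_eq1. replace (a + (j - a) + (D - j))%nat with D by lia.
        replace (a + (j - a))%nat with j by lia. ring. }
    replace (S D) with (S n + S n)%nat by (unfold D; lia).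
    rewrite sumR_split. rewrite sumR_zero.
    2:{ intros i Hi. destruct (Nat.leb (S n) i) eqn:E; [apply Nat.leb_le in E; lia | reflexivity]. }
    unfold G. rewrite Rplus_0_l. apply sumR_ext. intros i Hi.
    destruct (Nat.leb (S n) (S n + i)) eqn:E; [reflexivity | apply Nat.leb_gt in E; lia]. }
  assert (Hhigh : sumR (S n) (fun i => sumR (S (D - (S n + i))) (T (S n + i)%nat)) = G n p).
  { unfold G. apply sumR_ext. intros i Hi. fold D.
    set (a := (S n + i)%nat).
    rewrite (sumR_ext _ _ (fun b => (Cb D a * p ^ a) * (Cb (D - a) b * qq ^ b * (1 - p - qq) ^ (D - a - b)))).
    2:{ intros b Hb. unfold T. destruct (Nat.leb (S n) (a + b)) eqn:E.
        2:{ apply Nat.leb_gt in E. unfold a in E. lia. }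
        rewrite multinom_eq2. replace (a + b + (D - a - b))%nat with D by (unfold a, D in *; lia).
        replace (b + (D - a - b))%nat with (D - a)%nat by (unfold a, D in *; lia).
        replace (D - a - b)%nat with (D - a - b)%nat by lia. ring. }
    rewrite sumR_scal. rewrite binom_sum. unfold B.
    replace (qq + (1 - p - qq)) with (1 - p) by ring. ring. }
  replace (S D) with (S n + S n)%nat in Hfull by (unfold D; lia).
  rewrite sumR_split in Hfull. rewrite Hhigh in Hfull. lra.
Qed.

Lemma B_total D s : sumR (S D) (fun j => B D j s) = 1.
Proof. unfold B. rewrite binom_sum. replace (s + (1 - s)) with 1 by ring. apply pow1. Qed.

Lemma G_sym n s : G n s + G n (1 - s) = 1.
Proof.
  pose proof (B_total (2*n+1) s) as H.
  replace (S (2*n+1)) with (S n + S n)%nat in H by lia.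
  rewrite sumR_split in H. fold (G n s) in H.
  assert (G n (1 - s) = sumR (S n) (fun j => B (2*n+1) j s)); [|lra].
  unfold G. rewrite (sumR_rev (S n) (fun j => B (2*n+1) j s)).
  apply sumR_ext. intros i Hi. unfold B.
  rewrite (Binomial.pascal_step1 (2*n+1) (S n + i)) by lia.
  replace (2 * n + 1 - (S n + i))%nat with (S n - 1 - i)%nat by lia.
  replace (2 * n + 1 - (S n - 1 - i))%nat with (S n + i)%nat by lia.
  replace (1 - (1 - s)) with s by ring. ring.
Qed.

Lemma G_half n : G n (1/2) = 1/2.
Proof. pose proof (G_sym n (1/2)). replace (1 - 1/2) with (1/2) in H by field. lra. Qed.

Lemma G_nonneg n s : 0 <= s <= 1 -> 0 <= G n s.
Proof. intros Hs. apply sumR_nonneg. intros i _. unfold B.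
 apply Rmult_le_pos; [apply Rmult_le_pos|]; try apply Cb_nonneg; apply pow_le; lra. Qed.

Lemma G_bound n s : 0 <= s <= 1/2 -> G n s <= 2 * s * (4 * s * (1 - s)) ^ n.
Proof.
  intros Hs. unfold G.
  apply Rle_trans with (sumR (S n) (fun i => (s ^ (S n) * (1 - s) ^ n) * Cb (2*n+1) (S n + i))).
  { apply sumR_le. intros i Hi. unfold B.
    replace (2 * n + 1 - (S n + i))%nat with (n - i)%nat by lia.
    rewrite pow_add. replace ((1-s)^n) with ((1-s)^(n-i) * (1-s)^i) by (rewrite <- pow_add; f_equal; lia).
    assert (s ^ i <= (1 - s) ^ i) by (apply pow_incr; lra).
    pose proof (Cb_nonneg (2*n+1) (S n + i)).
    assert (0 <= s ^ S n) by (apply pow_le; lra).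
    assert (0 <= (1-s) ^ (n - i)) by (apply pow_le; lra).
    assert (0 <= s ^ i) by (apply pow_le; lra).
    replace (Cb (2 * n + 1) (S n + i) * (s ^ S n * s ^ i) * (1 - s) ^ (n - i)) with
      ((Cb (2 * n + 1) (S n + i) * s ^ S n * (1-s)^(n-i)) * s ^ i) by ring.
    replace (s ^ S n * ((1 - s) ^ (n - i) * (1 - s) ^ i) * Cb (2 * n + 1) (S n + i)) with
      ((Cb (2 * n + 1) (S n + i) * s ^ S n * (1-s)^(n-i)) * (1 - s) ^ i) by ring.
    apply Rmult_le_compat_l; auto. apply Rmult_le_pos; [apply Rmult_le_pos|]; auto. }
  rewrite sumR_scal.
  assert (Hc : sumR (S n) (fun i => Cb (2*n+1) (S n + i)) <= 2 ^ (2*n+1)).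
  { pose proof (binom_sum 1 1 (2*n+1)) as H. replace (1+1) with 2 in H by ring.
    rewrite <- H. replace (S (2*n+1)) with (S n + S n)%nat by lia. rewrite sumR_split.
    assert (0 <= sumR (S n) (fun i => Cb (2 * n + 1) i * 1 ^ i * 1 ^ (2 * n + 1 - i))).
    { apply sumR_nonneg. intros. rewrite !pow1. rewrite !Rmult_1_r. apply Cb_nonneg. }
    rewrite (sumR_ext (S n) (fun i => Cb (2 * n + 1) (S n + i) * 1 ^ (S n + i) * 1 ^ (2 * n + 1 - (S n + i)))
      (fun i => Cb (2*n+1) (S n + i))) by (intros; rewrite !pow1; ring). lra. }
  assert (0 <= s ^ S n * (1 - s) ^ n) by (apply Rmult_le_pos; apply pow_le; lra).
  apply Rle_trans with (s ^ S n * (1 - s) ^ n * 2 ^ (2 * n + 1)).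
  apply Rmult_le_compat_l; auto.
  right. rewrite !Rpow_mult_distr.
  assert (E : 2 ^ (2 * n + 1) = 2 * 4 ^ n).
  { rewrite pow_add, pow_mult. replace (2^2) with 4 by ring. ring. }
  rewrite E. simpl. ring.
Qed.

Lemma G_cv0 s : 0 <= s < 1/2 -> Un_cv (fun n => G n s) 0.
Proof.
  intros Hs eps Heps.
  assert (Hx : Rabs (4 * s * (1 - s)) < 1).
  { rewrite Rabs_right by nra. nra. }
  destruct (pow_lt_1_zero _ Hx eps Heps) as [N HN].
  exists N. intros n Hn. unfold R_dist. rewrite Rminus_0_r.
  pose proof (HN n Hn) as H1. pose proof (G_bound n s ltac:(lra)). pose proof (G_nonneg n s ltac:(lra)).
  assert (0 <= (4 * s * (1 - s)) ^ n) by (apply pow_le; nra).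
  rewrite Rabs_right in H1 by lra. rewrite Rabs_right by lra. nra.
Qed.

Lemma G_cv1 s : 1/2 < s <= 1 -> Un_cv (fun n => G n s) 1.
Proof.
  intros Hs eps Heps. destruct (G_cv0 (1 - s) ltac:(lra) eps Heps) as [N HN].
  exists N. intros n Hn. specialize (HN n Hn). unfold R_dist in *.
  pose proof (G_sym n s). replace (G n s - 1) with (-(G n (1-s) - 0)) by lra.
  rewrite Rabs_Ropp. auto.
Qed.

Lemma pmf_derive k x : is_derive (fun y => pois_pmf y (S k)) x (pois_pmf x k - pois_pmf x (S k)).
Proof.
  unfold pois_pmf. auto_derive; auto.
  change (match k with 0%nat => 1 | S _ => INR k + 1 end) with (INR (S k)).
  change (Factorial.fact (S k)) with (Factorial.fact k + k * Factorial.fact k)%nat.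
  rewrite plus_INR, mult_INR, S_INR.
  pose proof (INR_fact_lt_0 k). pose proof (pos_INR k).
  change (x ^ S k) with (x * x ^ k). revert H H0.
  generalize (exp (- x)) (x ^ k) (INR (Factorial.fact k)) (INR k). intros e xk f kk.
  intros. field. split; [nra|lra].
Qed.

Lemma lt_derive k x : is_derive (fun y => pois_lt y (S k)) x (- pois_pmf x k).
Proof.
  induction k.
  - unfold pois_lt, pois_pmf. simpl. auto_derive; auto. simpl. field.
  - unfold pois_lt. simpl sumR. fold (pois_lt x (S k)).
    eapply is_derive_ext. { intros t. reflexivity. }
    replace (- pois_pmf x (S k)) with (- pois_pmf x k + (pois_pmf x k - pois_pmf x (S k))) by ring.
    apply (is_derive_plus (fun y => pois_lt y (S k)) (fun y => pois_pmf y (S k))). exact IHk. apply pmf_derive.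
Qed.

Lemma is_derive_eq (f : R -> R) x l l' : is_derive f x l -> l = l' -> is_derive f x l'.
Proof. intros H E; subst; exact H. Qed.

Lemma pmf_nonneg mu k : 0 <= mu -> 0 <= pois_pmf mu k.
Proof. intros. unfold pois_pmf. apply Rmult_le_pos. apply Rmult_le_pos. apply Rlt_le, exp_pos.
 apply pow_le; auto. apply Rlt_le, Rinv_0_lt_compat, INR_fact_lt_0. Qed.

Lemma pmf_pos mu k : 0 < mu -> 0 < pois_pmf mu k.
Proof. intros. unfold pois_pmf. apply Rmult_lt_0_compat. apply Rmult_lt_0_compat. apply exp_pos.
 apply pow_lt; auto. apply Rinv_0_lt_compat, INR_fact_lt_0. Qed.

Lemma lt_S mu k : pois_lt mu (S k) = pois_lt mu k + pois_pmf mu k.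
Proof. reflexivity. Qed.

Lemma lt_nonneg mu k : 0 <= mu -> 0 <= pois_lt mu k.
Proof. intros. induction k; [unfold pois_lt; simpl; lra|]. pose proof (pmf_nonneg mu k H). rewrite lt_S. lra. Qed.


Lemma lt_decr k x y : 0 <= x <= y -> pois_lt y (S k) <= pois_lt x (S k).
Proof.
  intros [Hx Hxy]. destruct (Rle_lt_or_eq_dec _ _ Hxy) as [Hlt|Heq]; [|subst; lra].
  destruct (MVT_cor2 (fun t => pois_lt t (S k)) (fun t => - pois_pmf t k) x y Hlt) as [c [Hc1 Hc2]].
  { intros c _. apply is_derive_Reals. apply lt_derive. }
  pose proof (pmf_nonneg c k ltac:(lra)). cbv beta in Hc1.
  assert (0 <= pois_pmf c k * (y - x)) by (apply Rmult_le_pos; lra). lra.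
Qed.

Lemma lt_at0 k : pois_lt 0 (S k) = 1.
Proof.
  induction k.
  - unfold pois_lt, pois_pmf. simpl. rewrite Ropp_0, exp_0. field.
  - rewrite lt_S, IHk. unfold pois_pmf. rewrite pow_i by lia. unfold Rdiv. ring.
Qed.

Lemma lt_le1 mu k : 0 <= mu -> pois_lt mu k <= 1.
Proof. intros. destruct k. unfold pois_lt; simpl; lra.
 rewrite <- (lt_at0 k). apply lt_decr. lra. Qed.

Lemma lt_mono mu k k' : 0 <= mu -> (k <= k')%nat -> pois_lt mu k <= pois_lt mu k'.
Proof. intros Hm H. induction H. lra. rewrite lt_S. pose proof (pmf_nonneg mu m Hm). lra. Qed.

Lemma lt_as_sum x n : pois_lt x n = exp (- x) * sumR n (fun j => x ^ j / INR (Factorial.fact j)).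
Proof. unfold pois_lt. rewrite <- sumR_scal. apply sumR_ext. intros. unfold pois_pmf, Rdiv. ring. Qed.

Definition av (x : R) (j : nat) : R := x ^ j / INR (Factorial.fact j).

Lemma av_succ x j : av x (S j) = av x j * x / INR (S j).
Proof. unfold av. change (Factorial.fact (S j)) with (S j * Factorial.fact j)%nat.
 rewrite mult_INR. simpl pow. pose proof (INR_fact_lt_0 j). pose proof (lt_0_INR (S j) ltac:(lia)).
 field. lra. Qed.

Lemma av_pos x j : 0 < x -> 0 < av x j.
Proof. intros. unfold av. apply Rdiv_lt_0_compat. apply pow_lt; auto. apply INR_fact_lt_0. Qed.

Lemma pairing g i : (i < S g)%nat -> av (INR (S g)) (g - i) <= av (INR (S g)) (S g + i).
Proof.
  set (x := INR (S g)). assert (Hx : 0 < x) by (apply lt_0_INR; lia).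
  induction i; intros Hi.
  - rewrite Nat.sub_0_r, Nat.add_0_r. rewrite av_succ. unfold x. right. field. apply not_0_INR; lia.
  - assert (IH := IHi ltac:(lia)).
    assert (E1 : av x (g - i) = av x (g - S i) * x / INR (g - i)).
    { replace (g - i)%nat with (S (g - S i)) at 1 by lia. rewrite av_succ. f_equal. f_equal. f_equal. lia. }
    assert (E2 : av x (S g + S i) = av x (S g + i) * x / INR (S (S g + i))).
    { rewrite <- av_succ. f_equal. lia. }
    assert (Hu : 0 < INR (g - i)) by (apply lt_0_INR; lia).
    assert (Hv : 0 < INR (S (S g + i))) by (apply lt_0_INR; lia).
    assert (Huv : INR (g - i) * INR (S (S g + i)) <= x * x).
    { unfold x. rewrite <- !mult_INR. apply le_INR. nia. }
    assert (E3 : av x (g - S i) = av x (g - i) * INR (g - i) / x).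
    { rewrite E1. field. split; lra. }
    rewrite E3, E2.
    pose proof (av_pos x (g - i) Hx).
    set (A := av x (g - i)) in *. set (Bv := av x (S g + i)) in *.
    set (u := INR (g - i)) in *. set (v := INR (S (S g + i))) in *.
    replace (A * u / x) with ((A * u * v) / (x * v)) by (field; split; lra).
    replace (Bv * x / v) with ((Bv * x * x) / (x * v)) by (field; split; lra).
    unfold Rdiv. apply Rmult_le_compat_r. apply Rlt_le, Rinv_0_lt_compat, Rmult_lt_0_compat; lra.
    assert (A * (u * v) <= A * (x * x)) by (apply Rmult_le_compat_l; lra).
    assert (A * (x * x) <= Bv * (x * x)) by (apply Rmult_le_compat_r; nra).
    nra.
Qed.

Lemma lower_int g : pois_lt (INR (S g)) (S g) < 1/2.
Proof.
  set (x := INR (S g)). assert (Hx : 0 < x) by (apply lt_0_INR; lia).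
  assert (Hs : sumR (S g) (av x) <= sumR (S g) (fun i => av x (S g + i))).
  { rewrite sumR_rev. apply sumR_le. intros i Hi. replace (S g - 1 - i)%nat with (g - i)%nat by lia.
    apply pairing; auto. }
  pose proof (lt_le1 x (S g + S (S g)) ltac:(lra)) as H1.
  rewrite lt_as_sum in H1. rewrite sumR_split in H1.
  change (sumR (S (S g)) (fun i => x ^ (S g + i) / INR (Factorial.fact (S g + i))))
    with (sumR (S g) (fun i => x ^ (S g + i) / INR (Factorial.fact (S g + i))) + av x (S g + S g)) in H1.
  fold (av x) in H1. pose proof (av_pos x (S g + S g) Hx).
  rewrite lt_as_sum. fold (av x).
  change (sumR (S g) (fun i => x ^ (S g + i) / INR (Factorial.fact (S g + i))))
    with (sumR (S g) (fun i => av x (S g + i))) in H1.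
  pose proof (exp_pos (- x)). nra.
Qed.

Lemma lower mu f : 0 <= mu -> INR f <= mu -> pois_lt mu f < 1/2.
Proof.
  intros Hm Hf. destruct f. unfold pois_lt; simpl; lra.
  eapply Rle_lt_trans; [| apply lower_int]. apply lt_decr. split; auto. apply pos_INR.
Qed.

Lemma exp_le_mono a b : a <= b -> exp a <= exp b.
Proof. intros H. destruct (Rle_lt_or_eq_dec _ _ H). left; apply exp_increasing; auto. subst; lra. Qed.

Lemma psi_ineq mu c : 0 < mu -> 0 < c < mu -> 2 * c <= mu * (ln (mu + c) - ln (mu - c)).
Proof.
  intros Hm Hc.
  destruct (MVT_cor2 (fun u => mu * (ln (mu + u) - ln (mu - u)) - 2 * u)
              (fun u => mu * (/ (mu + u) + / (mu - u)) - 2) 0 c ltac:(lra)) as [d [Hd1 Hd2]].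
  { intros t Ht. apply is_derive_Reals. auto_derive. repeat split; lra. field. split; lra. }
  cbv beta in Hd1. rewrite Rplus_0_r, Rminus_0_r, Rminus_diag, Rmult_0_r, Rmult_0_r, Rminus_0_r in Hd1.
  assert (0 <= mu * (/ (mu + d) + / (mu - d)) - 2).
  { replace (mu * (/ (mu + d) + / (mu - d)) - 2) with (2 * d * d / ((mu + d) * (mu - d))) by (field; split; lra).
    unfold Rdiv; apply Rmult_le_pos; [nra| apply Rlt_le, Rinv_0_lt_compat; nra]. }
  nra.
Qed.

Lemma pmf_cmp mu n c : 0 < mu -> mu <= INR n -> 0 < c < mu ->
  pois_pmf (mu - c) n <= pois_pmf (mu + c) n.
Proof.
  intros Hm Hn Hc. unfold pois_pmf, Rdiv.
  apply Rmult_le_compat_r. apply Rlt_le, Rinv_0_lt_compat, INR_fact_lt_0.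
  rewrite <- (Rpower_pow n (mu - c)) by lra. rewrite <- (Rpower_pow n (mu + c)) by lra.
  unfold Rpower. rewrite <- !exp_plus. apply exp_le_mono.
  pose proof (psi_ineq mu c Hm Hc).
  assert (ln (mu - c) < ln (mu + c)) by (apply ln_increasing; lra).
  assert (mu * (ln (mu + c) - ln (mu - c)) <= INR n * (ln (mu + c) - ln (mu - c))).
  { apply Rmult_le_compat_r; lra. }
  nra.
Qed.

Lemma neg1_neg a : (-1) * (- a) = a.
Proof. ring. Qed.

Lemma lt_shift_derive n mu u :
  derivable_pt_lim (fun u => - pois_lt (mu + u) (S n) - pois_lt (mu - u) (S n)) u
            (pois_pmf (mu + u) n - pois_pmf (mu - u) n).
Proof.
  assert (H1 : is_derive (fun u => pois_lt (mu + u) (S n)) u (- pois_pmf (mu + u) n)).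
  { eapply is_derive_eq.
    apply (is_derive_comp (fun y => pois_lt y (S n)) (fun u => mu + u) u (- pois_pmf (mu + u) n) 1).
    apply lt_derive. auto_derive; auto.
    exact (Rmult_1_l _). }
  assert (H2 : is_derive (fun u => pois_lt (mu - u) (S n)) u (pois_pmf (mu - u) n)).
  { eapply is_derive_eq.
    apply (is_derive_comp (fun y => pois_lt y (S n)) (fun u => mu - u) u (- pois_pmf (mu - u) n) (-1)).
    apply lt_derive. auto_derive; auto.
    exact (neg1_neg _). }
  apply is_derive_Reals in H1. apply is_derive_Reals in H2.
  replace (pois_pmf (mu + u) n - pois_pmf (mu - u) n) with (- (- pois_pmf (mu + u) n) - pois_pmf (mu - u) n) by ring.
  apply (derivable_pt_lim_minus (fun u => - pois_lt (mu + u) (S n)) (fun u => pois_lt (mu - u) (S n))).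
  apply (derivable_pt_lim_opp (fun u => pois_lt (mu + u) (S n))). exact H1. exact H2.
Qed.

Lemma upper mu n : 0 < mu -> mu <= INR n -> 1/2 <= pois_lt mu (S n).
Proof.
  intros Hm Hn.
  destruct (MVT_cor2 (fun u => - pois_lt (mu + u) (S n) - pois_lt (mu - u) (S n))
              (fun u => pois_pmf (mu + u) n - pois_pmf (mu - u) n) 0 mu Hm) as [c [Hc1 Hc2]].
  { intros t _. apply lt_shift_derive. }
  cbv beta in Hc1. rewrite Rplus_0_r, Rminus_0_r, Rminus_diag, lt_at0 in Hc1.
  pose proof (pmf_cmp mu n c Hm Hn Hc2).
  assert (0 <= (pois_pmf (mu + c) n - pois_pmf (mu - c) n) * (mu - 0)) by (apply Rmult_le_pos; lra).
  pose proof (lt_nonneg (mu + mu) (S n) ltac:(lra)). lra.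
Qed.

Lemma ceil_aux N : forall x, 0 < x <= INR N -> exists n : nat, INR n - 1 < x <= INR n.
Proof.
  induction N; intros x Hx. simpl in Hx; lra.
  destruct (Rle_lt_dec x (INR N)) as [H|H].
  - apply IHN. lra.
  - exists (S N). rewrite S_INR in *. lra.
Qed.

Lemma ceil_exists x : 0 < x -> exists n : nat, INR n - 1 < x <= INR n.
Proof. intros Hx. destruct (INR_unbounded x) as [N HN]. apply (ceil_aux N). lra. Qed.

Lemma median_exists mu : 0 < mu ->
  exists m, floor_or_ceil mu m /\ pois_lt mu m < 1/2 /\ 1/2 <= pois_lt mu (S m).
Proof.
  intros Hm. destruct (ceil_exists mu Hm) as [n0 Hn0].
  destruct (Rle_lt_or_eq_dec _ _ (proj2 Hn0)) as [Hlt|Heq].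
  - destruct n0 as [|f]. simpl in Hn0; lra.
    rewrite S_INR in Hn0, Hlt.
    assert (Hf : INR f <= mu < INR f + 1) by lra.
    destruct (Rlt_le_dec (pois_lt mu (S f)) (1/2)) as [H|H].
    + exists (S f). split. right. unfold is_ceil. rewrite S_INR. lra.
      split; auto. apply upper; auto. rewrite S_INR; lra.
    + exists f. split. left. exact Hf. split; auto. apply lower; lra.
  - exists n0. split. right. unfold is_ceil. lra. split.
    apply lower; lra. apply upper; lra.
Qed.

Lemma medpois_G mu n k : medpois_pmf mu n k = G n (pois_lt mu (S k)) - G n (pois_lt mu k).
Proof. unfold medpois_pmf, pois_gt. exact (med_identity n (pois_lt mu k) (pois_pmf mu k)). Qed.

Lemma Un_cv_eq u l l' : Un_cv u l -> l = l' -> Un_cv u l'.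
Proof. intros H E; subst; auto. Qed.

Lemma Un_cv_ext u v l : (forall n, u n = v n) -> Un_cv v l -> Un_cv u l.
Proof. intros E H eps He. destruct (H eps He) as [N HN]. exists N. intros n Hn. rewrite E. auto. Qed.

Lemma G_cv_half s : s = 1/2 -> Un_cv (fun n => G n s) (1/2).
Proof. intros ->. intros eps He. exists O. intros n _. rewrite G_half. unfold R_dist.
 rewrite Rminus_diag, Rabs_R0. auto. Qed.

Lemma med_cv mu k a b : Un_cv (fun n => G n (pois_lt mu (S k))) a -> Un_cv (fun n => G n (pois_lt mu k)) b ->
  Un_cv (fun n => medpois_pmf mu n k) (a - b).
Proof. intros Ha Hb. eapply Un_cv_ext. intros n. apply medpois_G. apply CV_minus; auto. Qed.

Theorem mainTheorem4 (mu : R) (hmu : 0 < mu) :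
  exists q : nat -> R,
    (forall k : nat, Un_cv (fun n : nat => medpois_pmf mu n k) (q k)) /\
    ((exists m : nat, floor_or_ceil mu m /\ q = point_mass m) \/
     (exists m : nat, (floor_or_ceil mu m \/ floor_or_ceil mu (S m)) /\ q = unif2 m)).
Proof.
  destruct (median_exists mu hmu) as [m [Hfc [Hlo Hhi]]].
  assert (H01 : forall k, 0 <= pois_lt mu k <= 1).
  { intros k. split. apply lt_nonneg; lra. apply lt_le1; lra. }
  assert (Hmono : forall k k', (k <= k')%nat -> pois_lt mu k <= pois_lt mu k').
  { intros. apply lt_mono; auto; lra. }
  assert (HSS : 1/2 < pois_lt mu (S (S m))).
  { rewrite (lt_S mu (S m)). pose proof (pmf_pos mu (S m) hmu). lra. }
  assert (Low : forall k, (k <= m)%nat -> Un_cv (fun n => G n (pois_lt mu k)) 0).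
  { intros k Hk. apply G_cv0. split. apply H01. pose proof (Hmono _ _ Hk). lra. }
  assert (High : forall k, (S (S m) <= k)%nat -> Un_cv (fun n => G n (pois_lt mu k)) 1).
  { intros k Hk. apply G_cv1. split. pose proof (Hmono _ _ Hk). lra. apply H01. }
  destruct (Rle_lt_or_eq_dec _ _ Hhi) as [Hgt|Heq].
  - exists (point_mass m). split.
    2:{ left. exists m. auto. }
    intros k. unfold point_mass.
    destruct (lt_eq_lt_dec k m) as [[Hk|Hk]|Hk].
    + eapply Un_cv_eq. apply med_cv; apply Low; lia.
      destruct (Nat.eqb_spec k m); [lia|]. ring.
    + subst k. eapply Un_cv_eq. apply med_cv. apply G_cv1. split; [lra|apply H01]. apply Low; lia.
      rewrite Nat.eqb_refl. ring.
    + destruct (Nat.eq_dec k (S m)) as [->|Hne].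
      * eapply Un_cv_eq. apply med_cv. apply High; lia. apply G_cv1. split; [lra|apply H01].
        destruct (Nat.eqb_spec (S m) m); [lia|]. ring.
      * eapply Un_cv_eq. apply med_cv; apply High; lia.
        destruct (Nat.eqb_spec k m); [lia|]. ring.
  - exists (unif2 m). split.
    2:{ right. exists m. auto. }
    intros k. unfold unif2.
    destruct (lt_eq_lt_dec k m) as [[Hk|Hk]|Hk].
    + eapply Un_cv_eq. apply med_cv; apply Low; lia.
      destruct (Nat.eqb_spec k m); [lia|]. destruct (Nat.eqb_spec k (S m)); [lia|]. simpl. ring.
    + subst k. eapply Un_cv_eq. apply med_cv. apply G_cv_half. auto. apply Low; lia.
      rewrite Nat.eqb_refl. simpl. ring.
    + destruct (Nat.eq_dec k (S m)) as [->|Hne].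
      * eapply Un_cv_eq. apply med_cv. apply High; lia. apply G_cv_half. auto.
        destruct (Nat.eqb_spec (S m) m); [lia|]. rewrite Nat.eqb_refl. simpl. field.
      * eapply Un_cv_eq. apply med_cv; apply High; lia.
        destruct (Nat.eqb_spec k m); [lia|]. destruct (Nat.eqb_spec k (S m)); [lia|]. simpl. ring.
Qed.
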